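(* Let $k\geq1$ and $n\geq 2k$. Let $\mathcal{S}$ be an antichain of $\mathcal{F}=\mathcal{F}_{2k}^{[1,n]}$ that contains the set $[1,2]\cup[n-2k+3,n]$. Then $B_{\mathcal{S}}$ has exactly $\binom{n-k-1}{k-1}$ facets. Equivalently, in the poset $\mathcal{P}=\{(x_1,\dots,x_k): 1\leq x_1<\dots<x_k\leq n-k\}\subseteq\mathbb{N}^k$ (ordered componentwise), if $\mathcal{A}$ is an antichain containing $G=(1,n-2k+2,n-2k+3,\dots,n-k)$, then $|\mathcal{P}(\mathcal{A})\setminus\mathcal{P}(\mathcal{A}-\mathbf{1}_k)|=|\mathcal{P}(\{G\})|=\binom{n-k-1}{k-1}$.
   Context: Notation: $[m,n]=\{m,\dots,n\}$; $2k$-subsets of $[n]$ are identified with increasing vectors, and $\leq_p$ is the componentwise order. $\mathcal{F}_{2k}^{[1,n]}$ is the set of sets $\{i_1,i_1+1,\dots,i_k,i_k+1\}$ with $1\leq i_1$, $i_k\leq n-1$, $i_j\leq i_{j+1}-2$, ordered by $\leq_p$. $\mathcal{F}(\mathcal{S})$ is the order ideal generated by an antichain $\mathcal{S}$, $B(\mathcal{S})$ the pure complex whose facets are the sets of $\mathcal{F}(\mathcal{S})$, $\mathcal{S}-\mathbf{1}_{2k}=\{x-\mathbf{1}_{2k}: x\in\mathcal{S},\min x>1\}$, and $B_{\mathcal{S}}$ is the complex generated by the facets of $B(\mathcal{S})$ that are not facets of $B(\mathcal{S}-\mathbf{1}_{2k})$. Similarly, for an antichain $\mathcal{A}$ of $\mathcal{P}$,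 $\mathcal{P}(\mathcal{A})$ is the order ideal it generates and $\mathcal{A}-\mathbf{1}_k=\{x-\mathbf{1}_k: x\in\mathcal{A}, x_1>1\}$. The two formulations correspond under the poset isomorphism $R:\mathcal{P}\to\mathcal{F}$, $(x_1,\dots,x_k)\mapsto\{x_1,x_1+1,x_2+1,x_2+2,\dots,x_k+k-1,x_k+k\}$. *)

(* Defs.v *)
From mathcomp Require Import all_boot.
Set Implicit Arguments. Unset Strict Implicit. Unset Printing Implicit Defensive.

(* Subsets of [1,n] are represented by strictly increasing sequences of nats. *)

(* componentwise order <=_p on increasing vectors (forces equal length) *)
Definition lep (x y : seq nat) : bool := all2 leq x y.

Definition has_card (P : seq nat -> Prop) (N : nat) : Prop :=
  exists l : seq (seq nat), uniq l /\ (forall x, x \in l <-> P x) /\ size l = N.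

Definition pairs_of (s : seq nat) : seq nat :=
  flatten [seq [:: i; i.+1] | i <- s].

Definition inF (n k : nat) (x : seq nat) : Prop :=
  exists s : seq nat, [/\ size s = k, sorted (fun a b => a.+1 < b) s,
                          all (fun i => 0 < i < n) s & x = pairs_of s].

Definition antichainF (n k : nat) (S : seq (seq nat)) : Prop :=
  (forall x, x \in S -> inF n k x) /\
  (forall x y, x \in S -> y \in S -> lep x y -> x = y).

Definition idealF (n k : nat) (S : seq (seq nat)) (x : seq nat) : Prop :=
  inF n k x /\ exists2 y, y \in S & lep x y.

Definition shift1 (S : seq (seq nat)) : seq (seq nat) :=
  [seq map predn x | x <- S & 1 < head 0 x].

(* generating facets of B_S: facets of B(S) (= sets of F(S)) that are not
   facets of B(S - 1_{2k}) (= sets of F(S - 1_{2k})) *)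
Definition genBS (n k : nat) (S : seq (seq nat)) (x : seq nat) : Prop :=
  idealF n k S x /\ ~ idealF n k (shift1 S) x.

(* faces of B_S: subsets of generating facets *)
Definition faceBS (n k : nat) (S : seq (seq nat)) (f : seq nat) : Prop :=
  sorted ltn f /\ exists x, genBS n k S x /\ subseq f x.

Definition facetBS (n k : nat) (S : seq (seq nat)) (f : seq nat) : Prop :=
  faceBS n k S f /\ forall g, faceBS n k S g -> subseq f g -> g = f.

Definition inP (n k : nat) (x : seq nat) : Prop :=
  [/\ size x = k, sorted ltn x & all (fun i => 0 < i <= n - k) x].

Definition antichainP (n k : nat) (A : seq (seq nat)) : Prop :=
  (forall x, x \in A -> inP n k x) /\
  (forall x y, x \in A -> y \in A -> lep x y -> x = y).

Definition idealP (n k : nat) (A : seq (seq nat)) (x : seq nat) : Prop :=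
  inP n k x /\ exists2 y, y \in A & lep x y.

Definition topF (n k : nat) : seq nat := [:: 1; 2] ++ iota (n - 2 * k + 3) (2 * k - 2).
Definition Gvec (n k : nat) : seq nat := 1 :: iota (n - 2 * k + 2) (k - 1).

(* Main.v *)
Require Import Defs.
From Stdlib Require Import Classical ClassicalEpsilon Lia.
From mathcomp Require Import all_boot zify.
Set Implicit Arguments. Unset Strict Implicit. Unset Printing Implicit Defensive.

Lemma has_card_ext (P Q : seq nat -> Prop) N :
  (forall x, P x <-> Q x) -> has_card P N -> has_card Q N.
Proof.
move=> PQ [l [u [m s]]]; exists l; split=> //; split=> // x.
by rewrite m; exact: PQ.
Qed.

Lemma mapS_addn t (y : seq nat) : map S (map (addn t) y) = map (addn t.+1) y.
Proof. by rewrite -map_comp; apply: eq_map => a /=; rewrite addSn. Qed.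

Lemma map_addn0 (y : seq nat) : map (addn 0) y = y.
Proof. by rewrite (eq_map add0n) map_id. Qed.

Lemma abs_count (I B : seq nat -> Prop) N :
 (forall y, B y -> I y) ->
 (forall y, B y -> exists m, ~ I (map (addn m) y)) ->
 (forall y t, B y -> I (map (addn t.+1) y) -> I (map (addn t) y)) ->
 (forall z, I z -> exists y t, B y /\ z = map (addn t) y) ->
 (forall y y' t t', B y -> B y' -> map (addn t) y = map (addn t') y' -> y = y' /\ t = t') ->
 has_card B N -> has_card (fun z => I z /\ ~ I (map S z)) N.
Proof.
move=> H1 H2 H3 H4 H5 [l [ul [ml sl]]].
have down : forall y t t', B y -> t <= t' -> I (map (addn t') y) -> I (map (addn t) y).
  move=> y t t' By; elim: t' => [|t' IH]; first by rewrite leqn0 => /eqP->.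
  rewrite leq_eqVlt => /orP[/eqP-> //| ]; rewrite ltnS => le Ht'; apply: IH le _; exact: H3.
have ex : forall y, exists t, B y -> I (map (addn t) y) /\ ~ I (map (addn t.+1) y).
  move=> y; case: (classic (B y)) => By; last by exists 0.
  apply: NNPP => Hn.
  have all_I : forall t, I (map (addn t) y).
    elim=> [|t IH]; first by rewrite map_addn0; exact: H1.
    apply: NNPP => Hc; apply: Hn; exists t => _; by split.
  have [m Hm] := H2 y By; exact: Hm (all_I m).
pose top y := proj1_sig (constructive_indefinite_description _ (ex y)).
have topP : forall y, B y -> I (map (addn (top y)) y) /\ ~ I (map (addn (top y).+1) y).
  move=> y; exact: (proj2_sig (constructive_indefinite_description _ (ex y))).
have uniqT : forall y t, B y -> I (map (addn t) y) -> ~ I (map (addn t.+1) y) -> t = top y.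
  move=> y t By It Nt; have [Itop Ntop] := topP y By.
  case: (ltngtP t (top y)) => // lt.
  - by case: Nt; apply: down Itop.
  - by case: Ntop; apply: down It.
exists (map (fun y => map (addn (top y)) y) l); split; [|split].
- rewrite map_inj_in_uniq // => y y' yl y'l eq.
  by case: (H5 _ _ _ _ (proj1 (ml y) yl) (proj1 (ml y') y'l) eq).
- move=> z; split.
  + case/mapP => y yl ->; have By := proj1 (ml y) yl; have [? ?] := topP y By.
    by split=> //; rewrite mapS_addn.
  + case=> Iz Nz; have [y [t [By ez]]] := H4 z Iz; subst z.
    rewrite mapS_addn in Nz; have et := uniqT y t By Iz Nz.
    by apply/mapP; exists y; [exact: (proj2 (ml y) By) | rewrite et].
- by rewrite size_map.
Qed.
Lemma lep_trans x y z : lep x y -> lep y z -> lep x z.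
Proof.
rewrite /lep; elim: x y z => [|a x IH] [|b y] [|c z] //= /andP[ab xy] /andP[bc yz].
by rewrite (leq_trans ab bc); exact: IH xy yz.
Qed.

Lemma lep_shift t (y : seq nat) : lep (map (addn t) y) (map (addn t.+1) y).
Proof. rewrite /lep; elim: y => //= a y ->; rewrite addSn leqnSn //. Qed.

Lemma lep_head x y : lep x y -> head 0 x <= head 0 y.
Proof. by rewrite /lep; case: x y => [|a x] [|b y] //= /andP[]. Qed.

Lemma lep_predS z a : lep z (map predn a) -> all (fun i => 0 < i) a -> lep (map S z) a.
Proof.
rewrite /lep; elim: z a => [|u z IH] [|b a] //= /andP[h1 h2] /andP[b0 ha].
by apply/andP; split; [ lia | exact: IH ].
Qed.

Lemma lep_Spred z a : lep (map S z) a -> lep z (map predn a).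
Proof.
rewrite /lep; elim: z a => [|u z IH] [|b a] //= /andP[h1 h2].
by apply/andP; split; [ lia | exact: IH ].
Qed.

Lemma lep_bound z a M : lep (map S z) a -> all (fun i => i <= M) a -> all (fun i => i < M) z.
Proof.
rewrite /lep; elim: z a => [|u z IH] [|b a] //= /andP[h1 h2] /andP[b0 ha].
by apply/andP; split; [ lia | exact: IH h2 ha ].
Qed.

Lemma head_min (s : seq nat) : sorted ltn s -> all (fun i => head 0 s <= i) s.
Proof.
case: s => //= a s /(order_path_min ltn_trans) h; rewrite leqnn /=.
by apply: sub_all h => i; exact: ltnW.
Qed.

Lemma sub_add t (z : seq nat) : all (fun i => t <= i) z -> map (addn t) (map (subn^~ t) z) = z.
Proof. by elim: z => //= a z IH /andP[ta hz]; rewrite subnKC // IH. Qed.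

Lemma gen_main (U : seq nat -> Prop) M m T A N : 0 < m ->
 (forall x, U x -> [/\ size x = m, sorted ltn x & all (fun i => 0 < i <= M) x]) ->
 (forall z, U z -> all (fun i => i < M) z -> U (map S z)) ->
 (forall z t, U z -> t < head 0 z -> U (map (subn^~ t) z)) ->
 (forall y, U y -> head 0 y = 1 -> lep y T) ->
 (forall a, a \in A -> U a) -> T \in A ->
 has_card (fun y => U y /\ head 0 y = 1) N ->
 has_card (fun x => (U x /\ exists2 y, y \in A & lep x y) /\
                    ~ (U x /\ exists2 y, y \in shift1 A & lep x y)) N.
Proof.
move=> m0 Ub Uup Udown Utop UA TA hc.
pose I := fun x => U x /\ exists2 y, y \in A & lep x y.
have equiv: forall x, U x -> (U x /\ exists2 y, y \in shift1 A & lep x y) <-> I (map S x).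
  move=> x Ux; have [sx srt bx] := Ub x Ux; split.
  - case=> _ [y /mapP [a]]; rewrite mem_filter => /andP[ha aA] -> le.
    have [_ _ ba] := Ub a (UA a aA).
    have le' : lep (map S x) a.
      by apply: lep_predS le _; apply: sub_all ba => i /andP[].
    split; last by exists a.
    apply: Uup Ux _; apply: lep_bound le' _; by apply: sub_all ba => i /andP[].
  - case=> _ [a aA le]; split=> //; exists (map predn a); last exact: lep_Spred.
    apply/mapP; exists a => //; rewrite mem_filter aA andbT.
    have := lep_head le.
    case: x sx srt bx {Ux le} => [|u x] /=; first by move=> s0; rewrite -s0 in m0.
    move=> _ _ /andP[/andP[u0 _] _] h; lia.
apply: (has_card_ext _ (@abs_count I (fun y => U y /\ head 0 y = 1) N _ _ _ _ _ hc)).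
- move=> x; split.
  + case=> [[Ux ex] nI]; split; first by split.
    by move/(equiv x Ux).
  + case=> [[Ux ex] nI]; split; first by split.
    by move/(equiv x Ux).
- move=> y [Uy hy]; split=> //; exists T => //; exact: Utop.
- move=> y [Uy hy]; exists M => -[Uy' _].
  have [sy _ by'] := Ub _ Uy'.
  have [s _ _] := Ub _ Uy.
  case: y {Uy Uy'} hy sy by' s => [|u y] /=; first by move=> _ _ _ s0; rewrite -s0 in m0.
  move=> -> _ /andP[/andP[_ h] _]; lia.
- move=> y t [Uy hy] [U1 [a aA le]]; split; last first.
    by exists a => //; exact: lep_trans (lep_shift t y) le.
  have -> : map (addn t) y = map (subn^~ 1) (map (addn t.+1) y).
    by rewrite -map_comp; apply: eq_map => v /=; lia.
  apply: Udown U1 _.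
  have [s _ _] := Ub _ Uy.
  case: y {Uy le} hy s => [|u y] /=; first by move=> _ s0; rewrite -s0 in m0.
  move=> ->; lia.
- move=> z [Uz ex]; have [sz srt bz] := Ub _ Uz.
  have hz : 0 < head 0 z.
    case: z {Uz ex} sz srt bz => [|u z] /=; first by move=> s0; rewrite -s0 in m0.
    by move=> _ _ /andP[/andP[]].
  exists (map (subn^~ (head 0 z).-1) z), (head 0 z).-1; split; last first.
    rewrite sub_add //; apply: sub_all (head_min srt) => i; lia.
  split; first by apply: Udown Uz _; lia.
  case: z {Uz ex sz srt bz} hz => [|u z] //= ?; lia.
- move=> y y' t t' [Uy hy] [Uy' hy'].
  have [s _ _] := Ub _ Uy; have [s' _ _] := Ub _ Uy'.
  case: y {Uy} hy s => [|u y] /=; first by move=> _ s0; rewrite -s0 in m0.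
  case: y' {Uy'} hy' s' => [|u' y'] /=; first by move=> _ s0; rewrite -s0 in m0.
  move=> -> _ -> _ [htt e]; have ett : t = t' by lia.
  by subst t'; move/(inj_map (@addnI t)): e => ->.
Qed.

Ltac mlia := (try rewrite /ltn /=); lia.

Fixpoint incs (len m a : nat) {struct len} : seq (seq nat) :=
  if len is len'.+1 then
    (if m is m'.+1 then [seq a :: s | s <- incs len' m' a.+1] ++ incs len' m a.+1
     else [:: [::]])
  else (if m is 0 then [:: [::]] else [::]).

Lemma size_incs len m a : size (incs len m a) = 'C(len, m).
Proof.
elim: len m a => [|len IH] [|m] a //=.
by rewrite size_cat size_map !IH binS addnC.
Qed.

Lemma mem_map_cons a (b : nat) s L : (b :: s \in [seq a :: x | x <- L]) = (b == a) && (s \in L).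
Proof.
apply/mapP/andP => [[x xL [-> ->]] | [/eqP -> sL]]; last by exists s.
by rewrite eqxx.
Qed.

Lemma mem_incs len m a s : (s \in incs len m a) =
  [&& size s == m, sorted ltn s & all (fun i => a <= i < a + len) s].
Proof.
elim: len m a s => [|len IH] [|m] a [|b s] //=.
- rewrite in_nil; symmetry; apply/negbTE/negP => /and4P[_ _ h _]; lia.
- rewrite mem_cat IH /=; apply/negbTE/negP => /orP[/mapP[? _ //] | //].
- rewrite mem_cat mem_map_cons !IH /= path_sortedE; last exact: ltn_trans.
  rewrite eqSS.
  apply/idP/idP.
  + case/orP => [/and4P[/eqP -> sz srt al] | /and4P[sz /andP[al1 srt] hb al]].
    * have h1 : all (ltn a) s by apply/allP => i /(allP al) ?; mlia.
      have h2 : all (fun i => a <= i < a + len.+1) s by apply/allP => i /(allP al) ?; mlia.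
      rewrite sz srt h1 h2 /= andbT; mlia.
    * have h2 : all (fun i => a <= i < a + len.+1) s by apply/allP => i /(allP al) ?; mlia.
      rewrite sz al1 srt h2 /= andbT; mlia.
  + case/and4P => sz /andP[al1 srt] hb al.
    have h : all (fun i => a < i < a.+1 + len) s.
      by apply/allP => i ii; have := allP al i ii; have := allP al1 i ii; mlia.
    have [eab|nab] := eqVneq b a.
    * by subst b; rewrite sz srt h.
    * apply/orP; right; rewrite sz al1 srt h /= andbT.
      by move/eqP: nab; mlia.
Qed.

Lemma uniq_incs len m a : uniq (incs len m a).
Proof.
elim: len m a => [|len IH] [|m] a //=.
rewrite cat_uniq IH andbT (map_inj_uniq (fun x y (h : a :: x = a :: y) => congr1 behead h)) IH /=.
apply/hasPn => x; rewrite mem_incs => /and3P[_ _ al]; apply/mapP => -[y _ ex]; subst x.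
by move: al => /= /andP[]; rewrite ltnn.
Qed.

Lemma path_bound M a (s : seq nat) : path ltn a s -> all (fun i => i <= M) (a::s) -> a + size s <= M.
Proof.
elim: s a => [|b s IH] a /=; first by rewrite addn0 andbT.
move=> /andP[ab pb] /andP[aM al]; have := IH b pb al; mlia.
Qed.

Lemma le_iota M (s : seq nat) : sorted ltn s -> all (fun i => i <= M) s ->
  lep s (iota (M.+1 - size s) (size s)).
Proof.
rewrite /lep; elim: s => [|a s IH] //= pth al.
have hb := path_bound pth al.
have -> : (M.+1 - (size s).+1).+1 = M.+1 - size s by lia.
move: al => /= /andP[aM al]; apply/andP; split; first lia.
by apply: IH (path_sorted pth) al.
Qed.

Lemma baseP_card n k : 1 <= k -> 2 * k <= n ->
  has_card (fun y => inP n k y /\ head 0 y = 1) 'C(n - k - 1, k - 1).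
Proof.
move=> hk hn.
exists (map (cons 1) (incs (n - k - 1) (k - 1) 2)); split; [|split].
- by rewrite (map_inj_uniq (fun x y (h : 1 :: x = 1 :: y) => congr1 behead h)) uniq_incs.
- case=> [|b y].
    split; first by case/mapP.
    by case=> -[/= s0]; lia.
  rewrite mem_map_cons mem_incs; split.
  + case/andP => /eqP -> /and3P[sz srt al]; split=> //; split.
    * by move/eqP: sz => /= ->; lia.
    * rewrite /= path_sortedE ?srt ?andbT; last exact: ltn_trans.
      by apply/allP => i /(allP al); mlia.
    * rewrite /=; apply/andP; split; first lia.
      by apply/allP => i /(allP al); mlia.
  + case=> -[sz pth al] /= hb; subst b; rewrite eqxx /=.
    move: pth; rewrite /= path_sortedE; last exact: ltn_trans.
    case/andP => al1 srt; rewrite srt /=; apply/andP; split.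
      by apply/eqP; move: sz => /=; lia.
    apply/allP => i ii; have := allP al1 i ii; move: al => /= /andP[_ /allP al].
    have := al i ii; mlia.
- by rewrite size_map size_incs.
Qed.

Lemma UupP n k z : inP n k z -> all (fun i => i < n - k) z -> inP n k (map S z).
Proof.
case=> sz srt al alz; split; first by rewrite size_map.
- by rewrite sorted_map.
- by rewrite all_map; apply/allP => i /(allP alz) /=; lia.
Qed.

Lemma UdownP n k z t : inP n k z -> t < head 0 z -> inP n k (map (subn^~ t) z).
Proof.
case=> sz srt al ht; have hm := head_min srt.
split; first by rewrite size_map.
- apply: (homo_sorted_in (P := fun i => t < i)) srt; last first.
    by apply/allP => i /(allP hm); lia.
  move=> x y /= hx hy; rewrite /ltn /=; lia.
- rewrite all_map; apply/allP => i ii; have := allP hm i ii; have := allP al i ii.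
  rewrite /=; lia.
Qed.

Lemma UtopP n k y : 1 <= k -> 2 * k <= n -> inP n k y -> head 0 y = 1 -> lep y (Gvec n k).
Proof.
move=> hk hn [sz srt al]; case: y sz srt al => [|b y] //= sz srt al hb; subst b.
rewrite /lep /Gvec /=; apply: (_ : lep y (iota (n - 2 * k + 2) (k - 1))).
have -> : n - 2 * k + 2 = (n - k).+1 - size y by lia.
have -> : k - 1 = size y by lia.
apply: le_iota; first exact: path_sorted srt.
by move: al => /= /andP[_]; apply: sub_all => i /andP[].
Qed.

Notation gap2 := (fun a b : nat => a.+1 < b).

Lemma pairs_cons a s : pairs_of (a :: s) = a :: a.+1 :: pairs_of s.
Proof. by []. Qed.

Lemma size_pairs s : size (pairs_of s) = 2 * size s.
Proof. by elim: s => //= a s IH; rewrite -/(pairs_of s) IH; lia. Qed.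

Lemma all_pairs (P : pred nat) s : all P (pairs_of s) = all (fun i => P i && P i.+1) s.
Proof. by elim: s => //= a s IH; rewrite -/(pairs_of s) IH !andbA. Qed.

Lemma path_pairs a s : path gap2 a s -> path ltn a.+1 (pairs_of s).
Proof.
elim: s a => //= b s IH a /andP[ab pb]; rewrite -/(pairs_of s).
by rewrite /ltn /= ab ltnSn /=; apply: IH.
Qed.

Lemma sorted_pairs s : sorted gap2 s -> sorted ltn (pairs_of s).
Proof. by case: s => //= a s pth; rewrite -/(pairs_of s) /ltn /= ltnSn; apply: path_pairs. Qed.

Lemma map_pairs (f : nat -> nat) s : all (fun i => f i.+1 == (f i).+1) s ->
  map f (pairs_of s) = pairs_of (map f s).
Proof.
elim: s => //= a s IH /andP[/eqP h hs]; rewrite -/(pairs_of s) -/(pairs_of (map f s)).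
by rewrite h IH.
Qed.

Lemma head_pairs s : head 0 (pairs_of s) = head 0 s.
Proof. by case: s. Qed.

Lemma gap2_ltn s : sorted gap2 s -> sorted ltn s.
Proof. by apply: sub_sorted => x y /=; rewrite /ltn /=; lia. Qed.

Lemma UbF n k x : inF n k x -> [/\ size x = 2 * k, sorted ltn x & all (fun i => 0 < i <= n) x].
Proof.
case=> s [sz srt al ->]; split.
- by rewrite size_pairs sz.
- exact: sorted_pairs.
- rewrite all_pairs; apply/allP => i /(allP al) /=; lia.
Qed.

Lemma UupF n k z : inF n k z -> all (fun i => i < n) z -> inF n k (map S z).
Proof.
case=> s [sz srt al ->] alz; exists (map S s); split.
- by rewrite size_map.
- by rewrite sorted_map.
- rewrite all_map; move: alz; rewrite all_pairs => alz.
  by apply/allP => i /(allP alz) /=; lia.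
- by rewrite map_pairs //; apply/allP.
Qed.

Lemma UdownF n k z t : inF n k z -> t < head 0 z -> inF n k (map (subn^~ t) z).
Proof.
case=> s [sz srt al ->]; rewrite head_pairs => ht.
have hm := head_min (gap2_ltn srt).
have hs : all (fun i => t < i) s by apply/allP => i /(allP hm); lia.
exists (map (subn^~ t) s); split.
- by rewrite size_map.
- apply: (@homo_sorted_in nat nat (fun i => t < i) (subn^~ t) gap2 gap2 s _ hs srt).
  move=> x y hx hy /=; move: hx hy; rewrite /in_mem /=; lia.
- rewrite all_map; apply/allP => i ii; have := allP hs i ii; have := allP al i ii.
  rewrite /=; lia.
- rewrite map_pairs //; apply/allP => i /(allP hs) /= ?; apply/eqP; lia.
Qed.

Lemma UtopF n k y : 1 <= k -> 2 * k <= n -> inF n k y -> head 0 y = 1 -> lep y (topF n k).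
Proof.
move=> hk hn Fy; have [sz srt al] := UbF Fy.
case: Fy sz srt al => s [ss _ _ ->]; case: s ss => [|b s] //= ss.
rewrite -/(pairs_of s) => sz srt al hb; subst b.
rewrite /lep /topF /= ; apply: (_ : lep (pairs_of s) (iota (n - 2 * k + 3) (2 * k - 2))).
have hsz : size (pairs_of s) = 2 * k - 2 by rewrite size_pairs; lia.
have -> : n - 2 * k + 3 = n.+1 - size (pairs_of s) by lia.
rewrite -hsz; apply: le_iota.
  by move: srt => /= /path_sorted.
by move: al => /= /and3P[_ _ h]; apply: sub_all h => i /andP[].
Qed.

Fixpoint conv (c : nat) (s : seq nat) : seq nat :=
  if s is a :: s' then (a + c) :: conv c.+1 s' else [::].
Fixpoint unconv (c : nat) (s : seq nat) : seq nat :=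
  if s is a :: s' then (a - c) :: unconv c.+1 s' else [::].

Lemma size_conv c s : size (conv c s) = size s.
Proof. by elim: s c => //= a s IH c; rewrite IH. Qed.
Lemma size_unconv c s : size (unconv c s) = size s.
Proof. by elim: s c => //= a s IH c; rewrite IH. Qed.

Lemma conv_path a c x : path gap2 (a + c) (conv c.+1 x) = path ltn a x.
Proof.
elim: x a c => //= b x IH a c.
by rewrite -(IH b c.+1) addnS; congr andb; rewrite /ltn /=; apply/idP/idP; lia.
Qed.

Lemma conv_bound M c x : all (fun i => 0 < i <= M) x ->
  all (fun v => 0 < v < M + c + size x) (conv c x).
Proof.
elim: x c => //= a x IH c /andP[ha hx]; apply/andP; split; first lia.
by apply: sub_all (IH c.+1 hx) => v /=; lia.
Qed.

Lemma conv_unconv p c s : path gap2 p s -> c <= p -> conv c.+1 (unconv c.+1 s) = s.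
Proof.
elim: s p c => //= b s IH p c /andP[pb ps] cp.
by rewrite subnK; [rewrite (IH b c.+1) // | ]; lia.
Qed.

Lemma unconv_bound n c x : sorted ltn x -> all (fun v => v < n) (conv c x) ->
  all (fun v => v + c + size x <= n) x.
Proof.
elim: x c => //= a x IH c srt /andP[ha hx].
have hx' := IH c.+1 (path_sorted srt) hx.
apply/andP; split.
- case: x srt hx hx' {IH} => [|b x] /=; first by move=> *; lia.
  by move=> /andP[ab _] _ /andP[hb _]; move: ab; rewrite /ltn /=; lia.
- by apply: sub_all hx' => v /=; lia.
Qed.

Lemma conv_inj c x y : conv c x = conv c y -> x = y.
Proof.
elim: x y c => [|a x IH] [|b y] c //= [hab e].
by rewrite (IH _ _ e); congr cons; lia.
Qed.

Lemma pairs_inj s t : pairs_of s = pairs_of t -> s = t.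
Proof.
elim: s t => [|a s IH] [|b t] //= [-> _ e]; by rewrite (IH _ e).
Qed.

Lemma baseF_card n k : 1 <= k -> 2 * k <= n ->
  has_card (fun y => inF n k y /\ head 0 y = 1) 'C(n - k - 1, k - 1).
Proof.
move=> hk hn.
exists (map (fun x => pairs_of (1 :: conv 1 x)) (incs (n - k - 1) (k - 1) 2)); split; [|split].
- rewrite map_inj_uniq ?uniq_incs // => x y /pairs_inj [] /conv_inj //.
- move=> y; split.
  + case/mapP => x; rewrite mem_incs => /and3P[/eqP sz srt al] ->.
    split=> //; exists (1 :: conv 1 x); split=> //.
    * by rewrite /= size_conv sz; lia.
    * rewrite /= (conv_path 1 0) path_sortedE ?srt ?andbT; last exact: ltn_trans.
      by apply/allP => i /(allP al) ?; rewrite /ltn /=; lia.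
    * rewrite /=; apply/andP; split; first lia.
      have al' : all (fun i => 0 < i <= n - k) x by apply: sub_all al => i; lia.
      by apply: sub_all (conv_bound 1 al') => v; rewrite sz; lia.
  + case=> -[s [ss srt al ->]]; case: s ss srt al => [|b s] //= ss srt al hb; subst b.
    rewrite -/(pairs_of s).
    apply/mapP; exists (unconv 1 s); last by rewrite (conv_unconv (p := 1)).
    have cu := conv_unconv (p := 1) (c := 0) srt isT.
    have hp : path ltn 1 (unconv 1 s) by rewrite -(conv_path 1 0) addn0 cu.
    move: hp; rewrite path_sortedE; last exact: ltn_trans.
    case/andP=> h1 srt'.
    rewrite mem_incs size_unconv; apply/and3P; split.
    * by apply/eqP; lia.
    * by [].
    * 
      have h2 : all (fun v => v < n) (conv 1 (unconv 1 s)).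
        by rewrite cu; move: al => /andP[_]; apply: sub_all => i /andP[].
      have h3 := unconv_bound srt' h2.
      rewrite size_unconv in h3.
      apply/allP => i ii; have := allP h1 i ii; have := allP h3 i ii.
      rewrite /ltn /=; lia.
- by rewrite size_map size_incs.
Qed.

Lemma subseq_eq_size (s1 s2 : seq nat) : subseq s1 s2 -> size s1 = size s2 -> s1 = s2.
Proof. by move=> h e; apply/eqP; rewrite -(size_subseq_leqif h).2 e. Qed.

Lemma facet_gen n k S f : facetBS n k S f <-> genBS n k S f.
Proof.
split.
- case=> -[srt [y [gy sfy]]] mx.
  have fy : y = f.
    apply: mx sfy; split; last by exists y; split=> //; exact: subseq_refl.
    by have [_ ? _] := UbF gy.1.1.
  by rewrite -fy.
- move=> gf; have [sz srt _] := UbF gf.1.1.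
  split; first by split=> //; exists f; split=> //; exact: subseq_refl.
  move=> g [_ [y [gy sgy]]] sfg.
  have [sy _ _] := UbF gy.1.1.
  have fy : f = y := subseq_eq_size (subseq_trans sfg sgy) (etrans sz (esym sy)).
  subst y; refine (esym (subseq_eq_size sfg _)).
  by apply/eqP; rewrite eqn_leq (size_subseq sfg) (size_subseq sgy).
Qed.

Theorem lemma3p13 (n k : nat) (hk : 1 <= k) (hn : 2 * k <= n) :
  (forall S : seq (seq nat), antichainF n k S -> topF n k \in S ->
     has_card (facetBS n k S) 'C(n - k - 1, k - 1)) /\
  (forall A : seq (seq nat), antichainP n k A -> Gvec n k \in A ->
     has_card (fun x => idealP n k A x /\ ~ idealP n k (shift1 A) x)
              'C(n - k - 1, k - 1) /\
     has_card (idealP n k [:: Gvec n k]) 'C(n - k - 1, k - 1)).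
Proof.
split.
- move=> S [SF _] TS.
  apply: (has_card_ext (P := genBS n k S)); first by move=> x; split => /facet_gen.
  apply: (@gen_main (inF n k) n (2 * k) (topF n k) S _ _ _ _ _ _ _ TS (baseF_card hk hn)).
  + lia.
  + exact: UbF.
  + exact: UupF.
  + exact: UdownF.
  + by move=> y; apply: UtopF.
  + exact: SF.
- move=> A [AP _] GA; split.
  + apply: (@gen_main (inP n k) (n - k) k (Gvec n k) A _ _ _ _ _ _ _ GA (baseP_card hk hn)).
    * lia.
    * by move=> x [].
    * exact: UupP.
    * exact: UdownP.
    * by move=> y; apply: UtopP.
    * exact: AP.
  + apply: (has_card_ext _ (baseP_card hk hn)) => x; split.
    * case=> Px hx; split=> //; exists (Gvec n k); rewrite ?inE //.
      exact: UtopP.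
    * case=> Px [y]; rewrite inE => /eqP -> le; split=> //.
      have := lep_head le; case: Px => sz _ al.
      case: x sz al le => [|a x] /=; first by move=> s0; lia.
      by move=> _ /andP[/andP[a0 _] _] _; lia.
Qed.
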